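(* There exist a strongly connected digraph $D$ and a strongly connected spanning subdigraph $H$ of $D$ such that $src^*(D) > src^*(H)$.
   Context: All digraphs are finite, without loops or multiple arcs. For a strongly connected digraph $D$, an arc-colouring $\Gamma: A(D)\to\{1,\dots,k\}$ is strongly rainbow connected if for every ordered pair of distinct vertices $x,y$ there is a directed $xy$-path of length equal to the distance $d_D(x,y)$ (an $xy$-geodesic) whose arcs have pairwise distinct colours. The strong rainbow connection number $src^*(D)$ is the minimum $k$ for which $D$ admits a strongly rainbow connected arc-colouring with $k$ colours. *)

(* Defs.v *)
From mathcomp Require Import all_boot.
Set Implicit Arguments. Unset Strict Implicit. Unset Printing Implicit Defensive.

Section Digraphs.
Variable T : finType.

(* A digraph on vertex set T is an arc relation e : rel T; loopless means
   irreflexive.  Multiple arcs are impossible with a relation. *)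
Definition loopless (e : rel T) : Prop := irreflexive e.

Definition strongly_connected (e : rel T) : Prop :=
  forall x y : T, connect e x y.

Definition spanning_subdigraph (h e : rel T) : Prop := subrel h e.

(* A directed xy-path is x :: p with path e x p and last x p = y;
   its length is size p.  It is a geodesic if its length is minimal, i.e.
   equals the distance d(x,y). *)
Definition geodesic (e : rel T) (x y : T) (p : seq T) : Prop :=
  [/\ path e x p, last x p = y &
      forall q : seq T, path e x q -> last x q = y -> size p <= size q].

Definition path_arcs (x : T) (p : seq T) : seq (T * T) := zip (x :: p) p.

(* arc colouring with k colours (colours 'I_k stand for {1,...,k});
   values on non-arcs are irrelevant *)
Definition rainbow (k : nat) (c : T -> T -> 'I_k) (x : T) (p : seq T) : bool :=
  uniq [seq c a.1 a.2 | a <- path_arcs x p].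

Definition strongly_rainbow_connected (e : rel T) (k : nat)
    (c : T -> T -> 'I_k) : Prop :=
  forall x y : T, x != y -> exists p : seq T, geodesic e x y p /\ rainbow c x p.

Definition src_colourable (e : rel T) (k : nat) : Prop :=
  exists c : T -> T -> 'I_k, strongly_rainbow_connected e c.

(* is_src e k  <->  src^*(D) = k *)
Definition is_src (e : rel T) (k : nat) : Prop :=
  src_colourable e k /\ forall k', src_colourable e k' -> k <= k'.

End Digraphs.

(* Main.v *)
Require Import Defs.
From mathcomp Require Import all_boot.
Set Implicit Arguments. Unset Strict Implicit. Unset Printing Implicit Defensive.

Section Gen.
Variable T : finType.
Variable e : rel T.
Variable vs : seq T.
Hypothesis vsP : forall x, x \in vs.

Fixpoint reach (x : T) (n : nat) : seq T :=
  match n with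
  | 0 => [:: x]
  | n'.+1 => reach x n' ++ [seq z <- vs | has (fun w => e w z) (reach x n')]
  end.

Lemma reach_mono x m n : m <= n -> {subset reach x m <= reach x n}.
Proof.
elim: n => [|n IH]; first by rewrite leqn0 => /eqP ->.
rewrite leq_eqVlt => /orP [/eqP -> //|]; rewrite ltnS => /IH H z /H Hz.
by rewrite /= mem_cat Hz.
Qed.

Lemma reach_connect x n y : y \in reach x n -> connect e x y.
Proof.
elim: n y => [|n IH] y /=; first by rewrite mem_seq1 => /eqP ->.
rewrite mem_cat => /orP [/IH //|]; rewrite mem_filter => /andP [/hasP [w Hw Hwy] _].
apply: connect_trans (IH _ Hw) _; exact: connect1.
Qed.

Lemma path_reach x q : path e x q -> last x q \in reach x (size q).
Proof.
elim/last_ind: q => [|q z IH]; first by rewrite /= mem_seq1.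
rewrite rcons_path last_rcons size_rcons => /andP [Hp He].
rewrite /= mem_cat; apply/orP; right; rewrite mem_filter vsP andbT.
apply/hasP; exists (last x q) => //; exact: IH.
Qed.

Lemma geo_of x y p : path e x p -> last x p = y ->
  y \notin reach x (size p).-1 -> geodesic e x y p.
Proof.
move=> Hp Hl Hn; split => // q Hq Hlq.
case: p Hp Hl Hn => [|z p] Hp Hl Hn.
  by rewrite /= -Hl mem_seq1 eqxx in Hn.
rewrite leqNgt; apply/negP => Hlt.
move: Hn; rewrite -Hlq /=; move/negP; apply.
apply: (reach_mono (m := size q)); first by rewrite -ltnS.
exact: path_reach.
Qed.

Fixpoint allp (x : T) (n : nat) : seq (seq T) :=
  match n with
  | 0 => [:: [::]]
  | n'.+1 => flatten (map (fun z => if e x z then map (cons z) (allp z n') else [::]) vs)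
  end.

Lemma allp_mem x p : path e x p -> p \in allp x (size p).
Proof.
elim: p x => [|z p IH] x; first by rewrite /= mem_seq1.
rewrite /= => /andP [Hxz Hp].
apply/flatten_mapP; exists z; first exact: vsP.
by rewrite Hxz; apply: map_f; apply: IH.
Qed.

Lemma uniq_map_inj (A B : eqType) (f : A -> B) (s : seq A) a b :
  uniq (map f s) -> a \in s -> b \in s -> f a = f b -> a = b.
Proof.
elim: s => [//|u s IH] /= /andP [Hu Hs].
rewrite !inE => /orP [/eqP ->|Ha] /orP [/eqP ->|Hb] //.
- by move=> Hf; move: Hu; rewrite Hf map_f.
- by move=> Hf; move: Hu; rewrite -Hf map_f.
- exact: IH.
Qed.

Definition goodp (x y : T) (p : seq T) : bool :=
  [&& path e x p, last x p == y & y \notin reach x (size p).-1].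

Definition okwit k (c : T -> T -> 'I_k) (wit : T -> T -> seq T) : bool :=
  all (fun x => all (fun y => (x != y) ==> (goodp x y (wit x y) && rainbow c x (wit x y))) vs) vs.

Lemma okwit_src k c wit : okwit c wit -> strongly_rainbow_connected e (k:=k) c.
Proof.
move=> /allP H x y Hxy; move: (H x (vsP x)) => /allP /(_ y (vsP y)); rewrite Hxy /=.
case/andP => /and3P [Hp /eqP Hl Hn] Hr.
by exists (wit x y); split => //; apply: geo_of.
Qed.

Definition connb : bool :=
  all (fun x => all (fun y => y \in reach x (size vs)) vs) vs.

Lemma connb_sc : connb -> strongly_connected e.
Proof.
move=> /allP H x y; move: (H x (vsP x)) => /allP /(_ y (vsP y)).
exact: reach_connect.
Qed.

Definition forcedb (wit : T -> T -> seq T) (a b : T * T) : bool :=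
  has (fun x => has (fun y => [&& x != y, goodp x y (wit x y),
     all (fun q => (last x q == y) ==> (q == wit x y)) (allp x (size (wit x y))),
     a \in path_arcs x (wit x y) & b \in path_arcs x (wit x y)]) vs) vs.

Definition cliqueok wit (L : seq (T * T)) : bool :=
  uniq L && all (fun a => all (fun b => (a == b) || forcedb wit a b) L) L.

Lemma lower k (c : T -> T -> 'I_k) wit L :
  strongly_rainbow_connected e c -> cliqueok wit L -> size L <= k.
Proof.
move=> Hs /andP [HuL HL].
have Hinj : {in L &, injective (fun a => c a.1 a.2)}.
  move=> a b Ha Hb Hf; move/allP: HL => /(_ a Ha) /allP /(_ b Hb).
  case/orP => [/eqP //|/hasP [x _ /hasP [y _ /and5P [Hxy Hg Hall Ha' Hb']]]].
  case/and3P: Hg => Hp /eqP Hl Hn.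
  have [p [[Hpp Hpl Hmin] Hr]] := Hs x y Hxy.
  have Hgeo := geo_of Hp Hl Hn.
  case: Hgeo => _ _ Hmin0.
  have E1 := Hmin _ Hp Hl.
  have E2 := Hmin0 _ Hpp Hpl.
  have Hsz : size p = size (wit x y) by apply/eqP; rewrite eqn_leq E1 E2.
  have Hpin := allp_mem Hpp; rewrite Hsz in Hpin.
  move/allP: Hall => /(_ p Hpin); rewrite Hpl eqxx /= => /eqP Hpeq.
  rewrite Hpeq in Hr.
  exact: (uniq_map_inj (f := fun a => c a.1 a.2) Hr Ha' Hb' Hf).
have Hu : uniq (map (fun a => c a.1 a.2) L) by rewrite (map_inj_in_uniq Hinj).
rewrite -(size_map (fun a => c a.1 a.2)).
move/card_uniqP: Hu <-.
by apply: leq_trans (max_card _) _; rewrite card_ord.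
Qed.

End Gen.

Definition T6 := 'I_6.
Definition arcsD : seq (nat*nat) := [:: (0,1); (0,2); (1,0); (1,3); (2,4); (3,4); (4,2); (4,5); (5,1)].
Definition colD : seq (seq nat) := [:: [:: 0; 0; 0; 0; 0; 0]; [:: 1; 0; 0; 1; 0; 0]; [:: 0; 0; 0; 0; 2; 0]; [:: 0; 0; 0; 0; 0; 0]; [:: 0; 0; 1; 0; 0; 3]; [:: 0; 4; 0; 0; 0; 0]].
Definition tblD : seq (seq (seq nat)) := [:: [:: [:: ]; [:: 1]; [:: 2]; [:: 1; 3]; [:: 2; 4]; [:: 2; 4; 5]]; [:: [:: 0]; [:: ]; [:: 0; 2]; [:: 3]; [:: 3; 4]; [:: 3; 4; 5]]; [:: [:: 4; 5; 1; 0]; [:: 4; 5; 1]; [:: ]; [:: 4; 5; 1; 3]; [:: 4]; [:: 4; 5]]; [:: [:: 4; 5; 1; 0]; [:: 4; 5; 1]; [:: 4; 2]; [:: ]; [:: 4]; [:: 4; 5]]; [:: [:: 5; 1; 0]; [:: 5; 1]; [:: 2]; [:: 5; 1; 3]; [:: ]; [:: 5]]; [:: [:: 1; 0]; [:: 1]; [:: 1; 0; 2]; [:: 1; 3]; [:: 1; 3; 4]; [:: ]]].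
Definition arcsH : seq (nat*nat) := [:: (0,1); (1,0); (1,3); (2,4); (3,4); (4,2); (4,5); (5,1)].
Definition colH : seq (seq nat) := [:: [:: 0; 0; 0; 0; 0; 0]; [:: 1; 0; 0; 1; 0; 0]; [:: 0; 0; 0; 0; 2; 0]; [:: 0; 0; 0; 0; 2; 0]; [:: 0; 0; 3; 0; 0; 3]; [:: 0; 0; 0; 0; 0; 0]].
Definition tblH : seq (seq (seq nat)) := [:: [:: [:: ]; [:: 1]; [:: 1; 3; 4; 2]; [:: 1; 3]; [:: 1; 3; 4]; [:: 1; 3; 4; 5]]; [:: [:: 0]; [:: ]; [:: 3; 4; 2]; [:: 3]; [:: 3; 4]; [:: 3; 4; 5]]; [:: [:: 4; 5; 1; 0]; [:: 4; 5; 1]; [:: ]; [:: 4; 5; 1; 3]; [:: 4]; [:: 4; 5]]; [:: [:: 4; 5; 1; 0]; [:: 4; 5; 1]; [:: 4; 2]; [:: ]; [:: 4]; [:: 4; 5]]; [:: [:: 5; 1; 0]; [:: 5; 1]; [:: 2]; [:: 5; 1; 3]; [:: ]; [:: 5]]; [:: [:: 1; 0]; [:: 1]; [:: 1; 3; 4; 2]; [:: 1; 3]; [:: 1; 3; 4]; [:: ]]].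

Definition mkrel (A : seq (nat * nat)) : rel T6 := fun x y => (nat_of_ord x, nat_of_ord y) \in A.
Definition mko k (n : nat) : 'I_k.+1 := Ordinal (ltn_pmod n (ltn0Sn k)).
Definition mkcol k (C : seq (seq nat)) : T6 -> T6 -> 'I_k.+1 :=
  fun x y => mko k (nth 0 (nth [::] C x) y).
Definition mkwit (W : seq (seq (seq nat))) : T6 -> T6 -> seq T6 :=
  fun x y => map (mko 5) (nth [::] (nth [::] W x) y).
Definition mkL (L : seq (nat * nat)) : seq (T6 * T6) :=
  map (fun a => (mko 5 a.1, mko 5 a.2)) L.
Definition vs6 : seq T6 := map (mko 5) (iota 0 6).
Lemma vs6P : forall x : T6, x \in vs6.
Proof. by case=> [[|[|[|[|[|[|m]]]]]] Hm]. Qed.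

Definition eD := mkrel arcsD.
Definition eH := mkrel arcsH.

Lemma lemma1 :
  exists (T : finType) (e h : rel T),
    loopless e /\ strongly_connected e /\
    spanning_subdigraph h e /\ strongly_connected h /\
    exists kD kH : nat, is_src e kD /\ is_src h kH /\ kH < kD.
Proof.
exists ('I_6 : finType); exists eD, eH.
have Hl : all (fun x => ~~ eD x x) vs6 by vm_compute.
have Hsub : all (fun x => all (fun y => eH x y ==> eD x y) vs6) vs6 by vm_compute.
split; first by move=> x; apply/negbTE; move/allP: Hl; apply; apply: vs6P.
split; first by apply: (connb_sc vs6P); vm_compute.
split; first by move=> x y; move/allP: Hsub => /(_ x (vs6P x)) /allP /(_ y (vs6P y)) /implyP; apply.
split; first by apply: (connb_sc vs6P); vm_compute.
exists 5, 4; split; [|split; [|by []]].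
- split.
    exists (mkcol 4 colD); apply: (okwit_src vs6P (wit := mkwit tblD)); by vm_compute.
  move=> k [c Hc]; have := lower vs6P (wit := mkwit tblD) (L := mkL [:: (0,2); (1,0); (2,4); (4,5); (5,1)]) Hc.
  by apply; vm_compute.
- split.
    exists (mkcol 3 colH); apply: (okwit_src vs6P (wit := mkwit tblH)); by vm_compute.
  move=> k [c Hc]; have := lower vs6P (wit := mkwit tblH) (L := mkL [:: (0,1); (1,3); (3,4); (4,2)]) Hc.
  by apply; vm_compute.
Qed.
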